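(* Let $\Gamma$ be a connected, undirected graph without loops on $n$ nodes with Laplacian $\mathbf L=\mathbf K-\mathbf A$, and let $\phi_1,\dots,\phi_n$ be an orthonormal basis of eigenvectors of $\mathbf L$ with $\mathbf L\phi_i=\mu_i\phi_i$. Let $$\mathbf G=\begin{bmatrix}\mathbf 0&\mathbf I\\-\mathbf I&-\mathbf L\end{bmatrix},\qquad \mathbf P=(\mathbf G^T\mathbf G)^{1/2}$$ (the positive definite square root). Then the eigenvalues of $\mathbf P$ are the $n$ pairs of reciprocal values $$\lambda_i^{P\pm}=\tfrac12\Big[\sqrt{\mu_i^2+4}\pm\mu_i\Big],\quad i=1,\dots,n,$$ with corresponding normalized eigenvectors $$\psi_i^{P\pm}=\frac{1}{\sqrt{1+(\lambda_i^{P\pm})^2}}\begin{bmatrix}\phi_i\\ \pm\lambda_i^{P\pm}\phi_i\end{bmatrix}.$$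
   Context: $\mathbf A$ is the adjacency matrix, $\mathbf K$ the diagonal degree matrix, $\mathbf I,\mathbf 0$ the $n\times n$ identity and zero matrices. *)

(* Defs.v *)
From HB Require Import structures.
From mathcomp Require Import all_boot all_order all_algebra.
Set Implicit Arguments. Unset Strict Implicit. Unset Printing Implicit Defensive.
Import Order.TTheory GRing.Theory Num.Theory.
Local Open Scope ring_scope.

Section Defs.
Variable R : rcfType.

Definition simple_graph (n : nat) (e : rel 'I_n) : Prop :=
  symmetric e /\ irreflexive e.

Definition graph_connected (n : nat) (e : rel 'I_n) : Prop :=
  forall i j : 'I_n, connect e i j.

Definition adjmx (n : nat) (e : rel 'I_n) : 'M[R]_n :=
  \matrix_(i, j) (e i j)%:R.

Definition degmx (n : nat) (e : rel 'I_n) : 'M[R]_n :=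
  diag_mx (\row_i (\sum_j adjmx e i j)).

Definition laplacian (n : nat) (e : rel 'I_n) : 'M[R]_n := degmx e - adjmx e.

Definition Gmx (n : nat) (L : 'M[R]_n) : 'M[R]_(n + n) :=
  block_mx 0 1%:M (- 1%:M) (- L).

Definition posdef (m : nat) (P : 'M[R]_m) : Prop :=
  P^T = P /\ forall v : 'cV[R]_m, v != 0 -> 0 < (v^T *m P *m v) 0 0.

Definition lamP (mu : R) : R := (Num.sqrt (mu ^+ 2 + 4) + mu) / 2.
Definition lamM (mu : R) : R := (Num.sqrt (mu ^+ 2 + 4) - mu) / 2.

Definition psiP (n : nat) (phi : 'cV[R]_n) (mu : R) : 'cV[R]_(n + n) :=
  (Num.sqrt (1 + lamP mu ^+ 2))^-1 *: col_mx phi (lamP mu *: phi).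
Definition psiM (n : nat) (phi : 'cV[R]_n) (mu : R) : 'cV[R]_(n + n) :=
  (Num.sqrt (1 + lamM mu ^+ 2))^-1 *: col_mx phi (- (lamM mu *: phi)).

End Defs.

(* Main.v *)
Require Import Defs.
From HB Require Import structures.
From mathcomp Require Import all_boot all_order all_algebra.
Import Order.TTheory GRing.Theory Num.Theory.
Local Open Scope ring_scope.
From mathcomp Require Import ring lra.
Import Order.TTheory GRing.Theory Num.Theory.
Local Open Scope ring_scope.

Section S.
Variable R : rcfType.

Lemma sqrt_facts (mu : R) : let S := Num.sqrt (mu ^+ 2 + 4) in
  S ^+ 2 = mu ^+ 2 + 4 /\ 0 < S + mu /\ 0 < S - mu.
Proof.
move=> S.
have h2 : S ^+ 2 = mu ^+ 2 + 4 by rewrite sqr_sqrtr // addr_ge0 // sqr_ge0.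
have h0 : 0 <= S by exact: sqrtr_ge0.
split=> //; split; nra.
Qed.

Lemma lam_facts (mu : R) :
  [/\ 0 < lamP mu, 0 < lamM mu, lamP mu * lamM mu = 1,
      lamP mu ^+ 2 = 1 + lamP mu * mu & lamM mu ^+ 2 = 1 - lamM mu * mu].
Proof.
have [h2 [hp hm]] := sqrt_facts mu.
rewrite /lamP /lamM; set S := Num.sqrt _ in h2 hp hm *.
split.
- by apply: divr_gt0.
- by apply: divr_gt0.
- nra.
- nra.
- nra.
Qed.

Lemma posdef_eig m (P : 'M[R]_m) (v : 'cV[R]_m) (l : R) :
  posdef P -> 0 < l -> P *m (P *m v) = l ^+ 2 *: v -> P *m v = l *: v.
Proof.
move=> [_ hpd] hl hv.
set u := P *m v - l *: v.
have hu : P *m u = - l *: u.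
  rewrite /u mulmxBr hv -scalemxAr scalerBr !scaleNr opprK scalerA -expr2.
  by rewrite addrC.
apply/eqP; rewrite -subr_eq0 -/u; apply/negPn/negP => hne.
have := hpd u hne; rewrite -mulmxA hu -scalemxAr mxE.
have : 0 <= (u^T *m u) 0 0.
  rewrite mxE; apply: sumr_ge0 => k _; rewrite mxE -expr2; exact: sqr_ge0.
move=> h; nra.
Qed.

Lemma lap_sym n (e : rel 'I_n) : simple_graph e -> (laplacian R e)^T = laplacian R e.
Proof.
move=> [hs _]; rewrite /laplacian linearB /= /degmx tr_diag_mx; congr (_ - _).
by apply/matrixP => i j; rewrite !mxE hs.
Qed.

Lemma GtG_act n (L : 'M[R]_n) (phi : 'cV[R]_n) (mu s t : R) :
  L^T = L -> L *m phi = mu *: phi ->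
  (Gmx L)^T *m Gmx L *m col_mx (s *: phi) (t *: phi) =
  col_mx ((s + t * mu) *: phi) ((s * mu + t + t * mu ^+ 2) *: phi).
Proof.
move=> hL hphi.
rewrite /Gmx tr_block_mx !linearN /= hL trmx0 trmx1 -mulmxA mul_block_col.
rewrite mul0mx add0r !mulNmx !mul1mx -scalemxAr hphi scalerA.
rewrite mul_block_col mul0mx add0r !mulNmx !mul1mx !mulmxDr !mulmxN.
rewrite -!scalemxAr !hphi !scalerA.
by congr col_mx; apply/matrixP=> k j; rewrite !mxE; ring.
Qed.

Lemma colM m n p (A : 'M[R]_(m, n)) (B : 'M[R]_(n, p)) i :
  col i (A *m B) = A *m col i B.
Proof. by rewrite !colE mulmxA. Qed.

Lemma col_diag m n (A : 'M[R]_(m, n)) (d : 'rV[R]_n) i :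
  col i (A *m diag_mx d) = d 0 i *: col i A.
Proof. by apply/matrixP=> k j; rewrite mul_mx_diag !mxE mulrC. Qed.

Lemma mx_colP m n (A B : 'M[R]_(m, n)) : (forall i, col i A = col i B) -> A = B.
Proof.
move=> h; apply/matrixP=> k i; have := congr1 (fun M : 'M[R]_(m, 1) => M k 0) (h i).
by rewrite !mxE.
Qed.

Lemma gram n (Phi : 'M[R]_n) (a b : 'rV[R]_n) : Phi^T *m Phi = 1%:M ->
  (Phi *m diag_mx a)^T *m (Phi *m diag_mx b) = diag_mx (\row_j (a 0 j * b 0 j)).
Proof.
move=> h; rewrite trmx_mul tr_diag_mx mulmxA -(mulmxA _ Phi^T) h mulmx1.
exact: mulmx_diag.
Qed.

Lemma cfact (x : R) : (Num.sqrt (1 + x ^+ 2))^-1 * (Num.sqrt (1 + x ^+ 2))^-1 * (1 + x ^+ 2) = 1.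
Proof.
have hx : 0 < 1 + x ^+ 2 by rewrite ltr_pwDl // sqr_ge0.
set s := Num.sqrt _.
have hs : 0 < s by rewrite sqrtr_gt0.
have h2 : s ^+ 2 = 1 + x ^+ 2 by rewrite sqr_sqrtr // ltW.
rewrite -h2; field; by rewrite gt_eqF.
Qed.

Lemma char_poly_conj m (Q D : 'M[R]_m) : Q^T *m Q = 1%:M ->
  char_poly (Q *m D *m Q^T) = char_poly D.
Proof.
move=> hQ; have hQQ := mulmx1C hQ.
rewrite /char_poly /char_poly_mx.
have -> : 'X%:M - map_mx polyC (Q *m D *m Q^T) =
  map_mx polyC Q *m ('X%:M - map_mx polyC D) *m map_mx polyC Q^T.
  rewrite !map_mxM mulmxBr mulmxBl; congr (_ - _).
  rewrite mul_mx_scalar -scalemxAl -map_mxM.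
  by rewrite (_ : Q *m Q^T = 1%:M) // map_mx1 scalemx1.
rewrite det_mulmx det_mulmx mulrAC -det_mulmx -map_mxM (_ : Q *m Q^T = 1%:M) //.
by rewrite map_mx1 det1 mul1r.
Qed.

Lemma norm_psi n (phi : 'cV[R]_n) (x y : R) : phi^T *m phi = 1%:M -> y ^+ 2 = x ^+ 2 ->
  ((Num.sqrt (1 + x ^+ 2))^-1 *: col_mx phi (y *: phi))^T *m
  ((Num.sqrt (1 + x ^+ 2))^-1 *: col_mx phi (y *: phi)) = 1%:M.
Proof.
move=> hp hy.
have trZ : forall p q (c : R) (M : 'M[R]_(p, q)), (c *: M)^T = c *: M^T.
  by move=> p q c M; apply/matrixP=> a b; rewrite !mxE.
rewrite !trZ tr_col_mx trZ -scalemxAl -scalemxAr mul_row_col.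
rewrite -scalemxAl -scalemxAr hp !scalerA.
apply/matrixP=> a b; rewrite !ord1 !mxE eqxx /= !mulr1n.
have -> : y * y * 1 = x ^+ 2 by rewrite mulr1 -expr2.
exact: cfact.
Qed.
End S.

Theorem proposition5 (R : rcfType) (n : nat) (e : rel 'I_n)
    (Phi : 'M[R]_n) (mu : 'I_n -> R) (P : 'M[R]_(n + n)) :
  simple_graph e -> graph_connected e ->
  (* columns of Phi form an orthonormal basis of eigenvectors of L *)
  Phi^T *m Phi = 1%:M ->
  (forall i : 'I_n, laplacian R e *m col i Phi = mu i *: col i Phi) ->
  (* P is the positive definite square root of G^T G *)
  posdef P -> P *m P = (Gmx (laplacian R e))^T *m Gmx (laplacian R e) ->
  (* the eigenvalues of P (with multiplicity) are the lambda_i^{P+-} *)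
  char_poly P = \prod_(i < n) (('X - (lamP (mu i))%:P) * ('X - (lamM (mu i))%:P))
  /\ (forall i : 'I_n,
        lamP (mu i) * lamM (mu i) = 1
     /\ P *m psiP (col i Phi) (mu i) = lamP (mu i) *: psiP (col i Phi) (mu i)
     /\ P *m psiM (col i Phi) (mu i) = lamM (mu i) *: psiM (col i Phi) (mu i)
     /\ (psiP (col i Phi) (mu i))^T *m psiP (col i Phi) (mu i) = 1%:M
     /\ (psiM (col i Phi) (mu i))^T *m psiM (col i Phi) (mu i) = 1%:M).
Proof.
move=> hsg _ hPhi heig hpd hPP.
have hL : (laplacian R e)^T = laplacian R e := @lap_sym R n e hsg.
pose cP i := (Num.sqrt (1 + lamP (mu i) ^+ 2))^-1.
pose cM i := (Num.sqrt (1 + lamM (mu i) ^+ 2))^-1.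
have hphi i : (col i Phi)^T *m col i Phi = 1%:M.
  apply/matrixP => a b; rewrite !ord1.
  have := congr1 (fun M : 'M[R]_n => M i i) hPhi; rewrite !mxE !eqxx => <-.
  by apply: eq_bigr => k _; rewrite !mxE.
have psiPE i : psiP (col i Phi) (mu i) =
    col_mx (cP i *: col i Phi) ((cP i * lamP (mu i)) *: col i Phi).
  by rewrite /psiP scale_col_mx scalerA.
have psiME i : psiM (col i Phi) (mu i) =
    col_mx (cM i *: col i Phi) ((- (cM i * lamM (mu i))) *: col i Phi).
  by rewrite /psiM scale_col_mx scalerN scalerA scaleNr.
have eigP i : P *m psiP (col i Phi) (mu i) = lamP (mu i) *: psiP (col i Phi) (mu i).
  have [lp lm lpm lp2 lm2] := @lam_facts R (mu i).
  apply: posdef_eig => //.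
  rewrite mulmxA hPP psiPE (@GtG_act R _ _ _ _ _ _ hL (heig i)) scale_col_mx !scalerA.
  congr col_mx; congr (_ *: _).
    by rewrite lp2; ring.
  rewrite (_ : lamP (mu i) ^+ 2 * (cP i * lamP (mu i)) =
     cP i * lamP (mu i) * lamP (mu i) ^+ 2); last by ring.
  rewrite lp2 (_ : cP i * lamP (mu i) * (1 + lamP (mu i) * mu i) =
     cP i * lamP (mu i) + cP i * mu i * lamP (mu i) ^+ 2); last by ring.
  by rewrite lp2; ring.
have eigM i : P *m psiM (col i Phi) (mu i) = lamM (mu i) *: psiM (col i Phi) (mu i).
  have [lp lm lpm lp2 lm2] := @lam_facts R (mu i).
  apply: posdef_eig => //.
  rewrite mulmxA hPP psiME (@GtG_act R _ _ _ _ _ _ hL (heig i)) scale_col_mx !scalerA.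
  congr col_mx; congr (_ *: _).
    by rewrite lm2; ring.
  rewrite (_ : lamM (mu i) ^+ 2 * (- (cM i * lamM (mu i))) =
     - (cM i * lamM (mu i)) * lamM (mu i) ^+ 2); last by ring.
  rewrite lm2 (_ : - (cM i * lamM (mu i)) * (1 - lamM (mu i) * mu i) =
     - (cM i * lamM (mu i)) + cM i * mu i * lamM (mu i) ^+ 2); last by ring.
  by rewrite lm2; ring.
split; last first.
  move=> i; have [lp lm lpm lp2 lm2] := @lam_facts R (mu i).
  split=> //; split=> //; split=> //; split.
    exact: norm_psi.
  rewrite /psiM -scaleNr; apply: norm_psi => //; exact: sqrrN.
pose dp := \row_i lamP (mu i) : 'rV[R]_n.
pose dm := \row_i lamM (mu i) : 'rV[R]_n.
pose Qp := col_mx (Phi *m diag_mx (\row_i cP i))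
                  (Phi *m diag_mx (\row_i (cP i * lamP (mu i)))).
pose Qm := col_mx (Phi *m diag_mx (\row_i cM i))
                  (Phi *m diag_mx (\row_i (- (cM i * lamM (mu i))))).
have PQp : P *m Qp = Qp *m diag_mx dp.
  apply: mx_colP => i; rewrite colM !col_diag col_col_mx !col_diag !mxE -psiPE.
  by rewrite eigP.
have PQm : P *m Qm = Qm *m diag_mx dm.
  apply: mx_colP => i; rewrite colM !col_diag col_col_mx !col_diag !mxE -psiME.
  by rewrite eigM.
pose Q := row_mx Qp Qm.
pose D := diag_mx (row_mx dp dm).
have hPQ : P *m Q = Q *m D.
  by rewrite mul_mx_row PQp PQm /D diag_mx_row mul_row_block !mulmx0 addr0 add0r.
have hQ : Q^T *m Q = 1%:M.
  rewrite tr_row_mx mul_col_row !tr_col_mx !mul_row_col !gram //.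
  rewrite scalar_mx_block; congr block_mx; apply/matrixP => a b; rewrite !mxE.
  - rewrite -mulrnDl; case: eqVneq => [->|_]; rewrite ?mulr0n ?mulr1n //.
    have h := @cfact R (lamP (mu b)).
    change (cP b * cP b * (1 + lamP (mu b) ^+ 2) = 1) in h.
    by rewrite -h; ring.
  - rewrite -mulrnDl; have [lp lm lpm lp2 lm2] := @lam_facts R (mu b).
    rewrite (_ : cP a * cM a + cP a * lamP (mu a) * - (cM a * lamM (mu a)) =
       cP a * cM a * (1 - lamP (mu a) * lamM (mu a))); last by ring.
    case: eqVneq => [->|_]; rewrite ?mulr0n // mulr1n lpm subrr mulr0 //.
  - rewrite -mulrnDl; have [lp lm lpm lp2 lm2] := @lam_facts R (mu b).
    rewrite (_ : cM a * cP a + - (cM a * lamM (mu a)) * (cP a * lamP (mu a)) =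
       cP a * cM a * (1 - lamP (mu a) * lamM (mu a))); last by ring.
    case: eqVneq => [->|_]; rewrite ?mulr0n // mulr1n lpm subrr mulr0 //.
  - rewrite -mulrnDl; case: eqVneq => [->|_]; rewrite ?mulr0n ?mulr1n //.
    have h := @cfact R (lamM (mu b)).
    change (cM b * cM b * (1 + lamM (mu b) ^+ 2) = 1) in h.
    by rewrite -h; ring.
have hQQ := mulmx1C hQ.
have -> : P = Q *m D *m Q^T by rewrite -hPQ -mulmxA hQQ mulmx1.
rewrite char_poly_conj // char_poly_trig ?diag_mx_is_trig // big_split_ord big_split /=.
congr (_ * _); apply: eq_bigr => i _; rewrite /D [diag_mx _ _ _]mxE eqxx mulr1n
  ?row_mxEl ?row_mxEr /dp /dm mxE //.
Qed.
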